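(* Let $X$ be a smooth toric variety with fan $\Sigma$ and set of maximal cones $\Sigma_{max}$. The sequence of $R\llbracket T^* \rrbracket_F$-modules \[ R\llbracket \mathrm{CDiv}_T(X) \rrbracket_F \xrightarrow{\ \psi\ } \prod_{\tau \in \Sigma_{max}} R\llbracket T_{\tau}^* \rrbracket_F \xrightarrow{\ \pi\ } \prod_{\tau \neq \tau'} R\llbracket T_{\tau \cap \tau'}^* \rrbracket_F \] is exact, where $\psi = (\psi_\tau)_{\tau \in \Sigma_{max}}$, and $\pi$ has, for each pair $\tau \neq \tau'$ of maximal cones, component $\mathrm{pr}_{\tau,\tau\cap\tau'} - \mathrm{pr}_{\tau',\tau\cap\tau'}$ (applied to the $\tau$- and $\tau'$-coordinates), with $\mathrm{pr}_{\tau,\mu}: R\llbracket T_\tau^* \rrbracket_F \to R\llbracket T_\mu^* \rrbracket_F$ induced by the natural quotient $T_\tau^* \to T_\mu^*$ for a face $\mu$ of $\tau$.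
   Context: Let $R$ be a commutative ring and $F$ a one-dimensional commutative formal group law over $R$; write $x +_F y = F(x,y)$. For an abelian group $M$, let $R\llbracket x_M\rrbracket$ be the completion of $R[x_\lambda : \lambda \in M]$ at the kernel of the augmentation $x_\lambda \mapsto 0$; the formal group ring $R\llbracket M \rrbracket_F$ is the quotient of $R\llbracket x_M\rrbracket$ by the closure of the ideal generated by $x_0$ and $x_{\lambda+\mu} - (x_\lambda +_F x_\mu)$; the class of $x_\lambda$ is again denoted $x_\lambda$. A group homomorphism $\phi: M \to M'$ induces $R\llbracket M \rrbracket_F \to R\llbracket M' \rrbracket_F$, $x_\lambda \mapsto x_{\phi(\lambda)}$. $T$ is a split torus with character lattice $T^*$, cocharacter lattice $T_*$ and pairing $\langle\ ,\ \rangle$. $X$ is a smooth toric variety with fan $\Sigma$ in $T_*$; $\Sigma(1)$ denotes its rays, $\sigma(1)$ the rays of a cone $\sigma$, $v_\rho$ the primitive generator of $\rho$. For a cone $\sigma$, $T_\sigma^* = T^*/\sigma^\perp$ with $\sigma^\perp = \{\alpha : \langle\alpha,v\rangle=0\ \forall v\in\sigma\}$; it has basis $\{\alpha_{\sigma,\rho}:\rho\in\sigma(1)\}$ dual to $\{v_\rho : \rho\in\sigma(1)\}$. For a face $\mu$ of $\sigma$, the natural quotient $T_\sigma^* \to T_\mu^*$ sends $\alpha_{\sigma,\rho}$ to $\alpha_{\mu,\rho}$ if $\rho\in\mu(1)$ and to $0$ otherwise. $\mathrm{CDiv}_T(X) = \bigoplus_{\rho\in\Sigma(1)} \mathbb{Z}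 D_\rho$ (free on the $T$-invariant prime divisors). $\psi_\sigma: R\llbracket \mathrm{CDiv}_T(X) \rrbracket_F \to R\llbracket T_\sigma^* \rrbracket_F$ is induced by $\sum n_\rho D_\rho \mapsto \sum_{\rho \in \sigma(1)} n_\rho \alpha_{\sigma,\rho}$. All these rings are $R\llbracket T^* \rrbracket_F$-modules via $T^* \to \mathrm{CDiv}_T(X)$, $\alpha\mapsto \sum_\rho \langle \alpha, v_\rho\rangle D_\rho$, and via the quotient maps $T^* \to T_\sigma^*$. *)

(* Defs.v *)
From HB Require Import structures.
From mathcomp Require Import all_boot all_order all_algebra.
From mathcomp Require Import finmap.
From mathcomp.multinomials Require Import monalg.

Set Implicit Arguments.
Unset Strict Implicit.
Unset Printing Implicit Defensive.

Import GRing.Theory.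
Local Open Scope ring_scope.

(* Polynomial ring R[x_M] in the variables x_lambda, lambda in M        *)

Definition xpoly (R : comRingType) (M : zmodType) := {malg R[{cmonom M}]}.

Definition xvar (R : comRingType) (M : zmodType) (l : M) : xpoly R M :=
  << ucm l >>.

Definition fadd (R : comRingType) (A : comAlgType R) (a : nat -> nat -> R)
    (k : nat) (p q : A) : A :=
  \sum_(i < k) \sum_(j < k | (i + j < k)%N) a i j *: (p ^+ i * q ^+ j).

Definition high_deg (R : comRingType) (I : choiceType)
    (k : nat) (p : {malg R[{cmonom I}]}) : Prop :=
  forall m, m \in msupp p -> (k <= mdeg m)%N.

Definition X3 (R : comRingType) (i : nat) : {malg R[{cmonom nat}]} :=
  << ucm i >>.

Record fgl (R : comRingType) := FGL {
  fgl_coef : nat -> nat -> R;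
  fgl_00 : fgl_coef 0 0 = 0;
  fgl_10 : fgl_coef 1 0 = 1;
  fgl_01 : fgl_coef 0 1 = 1;
  fgl_comm : forall i j, fgl_coef i j = fgl_coef j i;
  (* F(x,F(y,z)) = F(F(x,y),z) as power series: equality in every degree < k *)
  fgl_assoc : forall k, high_deg k
     (fadd fgl_coef k (X3 R 0) (fadd fgl_coef k (X3 R 1) (X3 R 2))
      - fadd fgl_coef k (fadd fgl_coef k (X3 R 0) (X3 R 1)) (X3 R 2))
}.

(* The formal group ring R[[M]]_F, realized as the inverse limit over k *)
(* of R[x_M] / (J_k + I^k), where I is the augmentation ideal and J_k   *)
(* is generated by x_0 and x_{l+m} - (x_l +_F x_m) (F truncated in      *)
(* degree < k, which is harmless modulo I^k).                           *)

Definition in_ideal (A : comRingType) (G : A -> Prop) (p : A) : Prop :=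
  exists s : seq (A * A),
    (forall c, c \in s -> G c.2) /\ p = \sum_(c <- s) c.1 * c.2.

Definition fgr_gen (R : comRingType) (F : fgl R) (M : zmodType) (k : nat)
    (p : xpoly R M) : Prop :=
  p = xvar R (0 : M)
  \/ (exists l m : M,
        p = xvar R (l + m) - fadd (fgl_coef F) k (xvar R l) (xvar R m))
  \/ (exists s : seq M, size s = k /\ p = \prod_(l <- s) xvar R l).

Definition fgr_cong (R : comRingType) (F : fgl R) (M : zmodType) (k : nat)
    (p q : xpoly R M) : Prop :=
  in_ideal (fgr_gen F k) (p - q).

(* an element of R[[M]]_F : a compatible sequence of representatives *)
Definition fgr_elem (R : comRingType) (F : fgl R) (M : zmodType)
    (a : nat -> xpoly R M) : Prop :=
  forall k, fgr_cong F k (a k.+1) (a k).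

Definition fgr_eq (R : comRingType) (F : fgl R) (M : zmodType)
    (a b : nat -> xpoly R M) : Prop :=
  forall k, fgr_cong F k (a k) (b k).

Definition fgr_pmap (R : comRingType) (M M' : zmodType) (phi : M -> M')
    (p : xpoly R M) : xpoly R M' :=
  mmap (fun c : R => c%:MP)
       (fun m : {cmonom M} => \prod_(l <- finsupp m) xvar R (phi l) ^+ m l) p.

Definition fgr_map (R : comRingType) (M M' : zmodType) (phi : M -> M')
    (a : nat -> xpoly R M) : nat -> xpoly R M' :=
  fun k => fgr_pmap phi (a k).

Definition fgr_mul (R : comRingType) (M : zmodType)
    (a b : nat -> xpoly R M) : nat -> xpoly R M :=
  fun k => a k * b k.

(* Smooth fans.  T_* = T^* = Z^n ('rV[int]_n) with the dot pairing.     *)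
(* ray : the finite set Sigma(1), v r the primitive generator of r.    *)
(* A (smooth, hence simplicial) cone is given by its set of rays.      *)

Definition pairing (n : nat) (a w : 'rV[int]_n) : int :=
  \sum_(i < n) a 0 i * w 0 i.

Definition cone_mem (n : nat) (ray : finType) (v : ray -> 'rV[int]_n)
    (S : {set ray}) (x : 'rV[rat]_n) : Prop :=
  exists c : ray -> rat, (forall r, 0 <= c r) /\
    x = \sum_(r in S) c r *: map_mx (fun z : int => z%:~R) (v r).

Record smooth_fan (n : nat) (ray : finType) (v : ray -> 'rV[int]_n)
    (Sigma : {set {set ray}}) : Prop := {
  fan_rays : forall r, [set r] \in Sigma;
  (* closed under faces (faces of a simplicial cone = subsets of rays) *)
  fan_faces : forall S S' : {set ray}, S \in Sigma -> S' \subset S -> S' \in Sigma;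
  fan_inter : forall S S' : {set ray}, S \in Sigma -> S' \in Sigma ->
     forall x, cone_mem v S x -> cone_mem v S' x -> cone_mem v (S :&: S') x;
  (* smoothness: the ray generators of each cone are part of a Z-basis *)
  fan_smooth : forall S : {set ray}, S \in Sigma ->
     exists B : 'M[int]_n, B \in unitmx /\
       exists f : ray -> 'I_n, {in S &, injective f} /\
         forall r, r \in S -> row (f r) B = v r
}.

Definition maximal_cones (ray : finType) (Sigma : {set {set ray}}) :
    {set {set ray}} :=
  [set S in Sigma | [forall S' in Sigma, (S \subset S') ==> (S' == S)]].

(* T_sigma^* in the coordinates of the basis alpha_{sigma,rho}, rho in S *)
Definition Lat (ray : finType) (S : {set ray}) :=
  {ffun {r : ray | r \in S} -> int}.

(* the natural map T_S^* -> T_S'^*  (alpha_{S,r} |-> alpha_{S',r} if r in S',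
   0 otherwise); used for psi_sigma (S = [set: ray], CDiv_T(X)) and pr *)
Definition restr (ray : finType) (S S' : {set ray}) (f : Lat S) : Lat S' :=
  [ffun y : {r : ray | r \in S'} =>
     (match (insub (sval y) : option {r : ray | r \in S}) with
      | Some z => f z | None => 0%R end : int)].

(* the quotient map T^* -> T_S^*, alpha |-> sum_r <alpha, v_r> alpha_{S,r};
   for S = [set: ray] this is T^* -> CDiv_T(X) *)
Definition to_Tsig (n : nat) (ray : finType) (v : ray -> 'rV[int]_n)
    (S : {set ray}) (a : 'rV[int]_n) : Lat S :=
  [ffun y : {r : ray | r \in S} => pairing a (v (sval y))].

Arguments restr {ray} S S' f.
Arguments to_Tsig {n ray} v S a.

(* Main.v *)
Require Import Defs.
From HB Require Import structures.
From mathcomp Require Import all_boot all_order all_algebra.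
From mathcomp Require Import finmap.
From mathcomp.multinomials Require Import monalg.
Set Implicit Arguments. Unset Strict Implicit.
Import GRing.Theory.
Local Open Scope fset_scope.
Local Open Scope ring_scope.
Section P.
Variables (R : comRingType) (M M' : zmodType) (phi : M -> M').
Definition hh (m : {cmonom M}) : xpoly R M' := \prod_(l <- finsupp m) xvar R (phi l) ^+ m l.
Lemma pmapE p : fgr_pmap phi p = mmap (fun c : R => c%:MP) hh p. Proof. by []. Qed.
Lemma pmapU c m : fgr_pmap phi << c *g m >> = c%:MP * hh m.
Proof. by rewrite pmapE mmapU. Qed.
Lemma pmapD : {morph fgr_pmap (R:=R) phi : x y / x + y}.
Proof. move=> x y; by rewrite !pmapE mmapD. Qed.
Lemma pmapN : {morph fgr_pmap (R:=R) phi : x / - x}.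
Proof. move=> x; by rewrite !pmapE mmapN. Qed.
Lemma pmap0 : fgr_pmap (R:=R) phi 0 = 0.
Proof. by rewrite !pmapE mmap0. Qed.
Lemma pmapB : {morph fgr_pmap (R:=R) phi : x y / x - y}.
Proof. move=> x y; by rewrite pmapD pmapN. Qed.

Lemma hhEw (m : {cmonom M}) (d : {fset M}) : finsupp m `<=` d -> hh m = \prod_(l <- d) xvar R (phi l) ^+ m l.
Proof.
move=> le; rewrite /hh (big_fset_incl _ le) //.
by move=> i _; rewrite -cmE_neq0 negbK => /eqP ->; rewrite expr0.
Qed.
Lemma hh1 : hh (mone : {cmonom M}) = 1.
Proof. by rewrite /hh mdom1 big_seq_fset0. Qed.
Lemma hhM (m1 m2 : {cmonom M}) : hh (mmul m1 m2) = hh m1 * hh m2.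
Proof.
rewrite (hhEw (fsubsetUl (finsupp m1) (finsupp m2))) (hhEw (fsubsetUr (finsupp m1) (finsupp m2))).
rewrite [LHS]/hh mdomD.
rewrite -big_split /=; apply/eq_bigr=> i _; by rewrite cmM exprD.
Qed.
Lemma pmapM : {morph fgr_pmap (R:=R) phi : x y / x * y}.
Proof.
move=> g1 g2; rewrite malgME !pmapE raddf_sum /= mulr_suml; apply: eq_bigr=> i _.
rewrite raddf_sum mulr_sumr /=; apply: eq_bigr=> j _.
rewrite -!pmapE !pmapU hhM mpolyCM.
exact: mulrACA.
Qed.
Lemma pmap1 : fgr_pmap (R:=R) phi 1 = 1.
Proof. by rewrite -mpolyC1E pmapU hh1 mpolyC1E mulr1. Qed.
Lemma pmapC c : fgr_pmap (R:=R) phi c%:MP = c%:MP.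
Proof. by rewrite pmapU hh1 mulr1. Qed.
Lemma pmapX p k : fgr_pmap (R:=R) phi (p ^+ k) = fgr_pmap phi p ^+ k.
Proof. elim: k => [|k IH]; by rewrite ?expr0 ?pmap1 // !exprS pmapM IH. Qed.
Lemma pmapZ c p : fgr_pmap (R:=R) phi (c *: p) = c *: fgr_pmap phi p.
Proof. by rewrite -!mul_malgC pmapM pmapC. Qed.
Lemma pmap_sum (I : Type) (s : seq I) (P : pred I) (G : I -> xpoly R M) :
  fgr_pmap phi (\sum_(i <- s | P i) G i) = \sum_(i <- s | P i) fgr_pmap phi (G i).
Proof. exact: (big_morph _ pmapD pmap0). Qed.
Lemma pmap_prod (I : Type) (s : seq I) (P : pred I) (G : I -> xpoly R M) :
  fgr_pmap phi (\prod_(i <- s | P i) G i) = \prod_(i <- s | P i) fgr_pmap phi (G i).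
Proof. exact: (big_morph _ pmapM pmap1). Qed.
Lemma pmap_xvar l : fgr_pmap phi (xvar R l) = xvar R (phi l).
Proof.
rewrite /xvar pmapU mpolyC1E mul1r /hh mdomU big_seq_fset1.
by rewrite cmUU expr1.
Qed.
Lemma pmap_fadd (a : nat -> nat -> R) k (p q : xpoly R M) : fgr_pmap phi (fadd a k p q) = fadd a k (fgr_pmap (R:=R) phi p) (fgr_pmap (R:=R) phi q).
Proof.
rewrite /fadd pmap_sum; apply: eq_bigr => i _; rewrite pmap_sum; apply: eq_bigr => j _.
by rewrite pmapZ pmapM !pmapX.
Qed.
End P.

Section Comp.
Variables (R : comRingType) (M M' M'' : zmodType).
Lemma eq_pmap (phi phi' : M -> M') p : phi =1 phi' -> fgr_pmap (R:=R) phi p = fgr_pmap phi' p.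
Proof.
move=> E; rewrite /fgr_pmap /mmap.
apply: eq_bigr => m _.
have H : \prod_(l <- finsupp m) xvar R (phi l) ^+ m l = \prod_(l <- finsupp m) xvar R (phi' l) ^+ m l.
  apply: eq_bigr => l _.
  by rewrite E.
exact: (congr1 (fun x => (p@_m)%:MP * x) H).
Qed.
Lemma pmap_comp (phi : M -> M') (psi : M' -> M'') p :
  fgr_pmap (R:=R) psi (fgr_pmap phi p) = fgr_pmap (fun x => psi (phi x)) p.
Proof.
rewrite {1}(pmapE phi) mmapE pmap_sum [RHS]pmapE mmapE; apply: eq_bigr => m _.
rewrite pmapM pmapC /hh pmap_prod; congr (_ * _); apply: eq_bigr => l _.
by rewrite pmapX pmap_xvar.
Qed.
End Comp.

Section Id.
Variables (R : comRingType) (M : zmodType).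
Lemma cm_decomp (m : {cmonom M}) :
  m = \big[mmul/mone]_(l <- finsupp m) \big[mmul/mone]_(0 <= j < m l) ucm l.
Proof.
apply/eqP/cmP => i.
rewrite (big_morph (fun x : {cmonom M} => x i) (cmM i) (cm1 i)).
under eq_bigr => l _ do rewrite (big_morph (fun x : {cmonom M} => x i) (cmM i) (cm1 i)) sum_nat_const_nat subn0 cmU.
case: (boolP (i \in finsupp m)) => Hi.
  rewrite (big_fsetD1 i) //= eqxx muln1 big_seq big1 ?addn0 // => l.
  by rewrite in_fsetD1 => /andP [Hl _]; rewrite (negbTE Hl) muln0.
rewrite big_seq big1; last first.
  by move=> l Hl; case: eqP => [E|]; [by move: Hi; rewrite -E Hl | by rewrite muln0].
by apply/eqP; rewrite cmE_eq0.
Qed.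
Lemma malgUM (m1 m2 : {cmonom M}) : << mmul m1 m2 >> = << m1 >> * << m2 >> :> xpoly R M.
Proof. by rewrite malgM_def fgmulUU mulr1. Qed.
Lemma malgU1 : << (mone : {cmonom M}) >> = 1 :> xpoly R M.
Proof. by rewrite mpolyC1E. Qed.
Lemma hh_id (m : {cmonom M}) : hh R (fun x : M => x) m = << m >>.
Proof.
rewrite {2}(cm_decomp m) (big_morph _ malgUM malgU1) /hh.
have H : forall l, xvar R l ^+ m l = << \big[mmul/mone]_(0 <= j < m l) ucm l >> :> xpoly R M.
  by move=> l; rewrite (big_morph _ malgUM malgU1) prodr_const_nat subn0.
exact: (eq_bigr _ (fun l _ => H l)).
Qed.
Lemma pmap_id (p : xpoly R M) : fgr_pmap (fun x => x) p = p.
Proof.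
rewrite {2}(monalgE p) /fgr_pmap /mmap.
have H : forall m, (p@_m)%:MP * hh R (fun x : M => x) m = << p@_m *g m >> :> xpoly R M.
  by move=> m; rewrite hh_id malgM_def fgmulUU mulr1 mul1m.
exact: (eq_bigr _ (fun m _ => H m)).
Qed.
End Id.

Section Ideal.
Variables (A : comRingType) (G : A -> Prop).
Lemma in_ideal0 : in_ideal G 0.
Proof. by exists [::]; split => //; rewrite big_nil. Qed.
Lemma in_idealD p q : in_ideal G p -> in_ideal G q -> in_ideal G (p + q).
Proof.
move=> [s1 [H1 ->]] [s2 [H2 ->]]; exists (s1 ++ s2); split; last by rewrite big_cat.
by move=> c; rewrite mem_cat => /orP [/H1|/H2].
Qed.
Lemma in_idealMl r p : in_ideal G p -> in_ideal G (r * p).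
Proof.
move=> [s [H ->]]; exists [seq (r * c.1, c.2) | c <- s]; split.
  by move=> c /mapP [c' Hc' ->] /=; apply: H.
by rewrite big_map mulr_sumr; apply: eq_bigr => c _ /=; rewrite mulrA.
Qed.
Lemma in_idealN p : in_ideal G p -> in_ideal G (- p).
Proof. by move=> H; rewrite -mulN1r; apply: in_idealMl. Qed.
End Ideal.

Section Cong.
Variables (R : comRingType) (F : fgl R) (M : zmodType) (k : nat).
Local Notation cong := (@fgr_cong R F M k).
Lemma cong_eq p q : p = q -> cong p q.
Proof. by move=> ->; rewrite /fgr_cong subrr; apply: in_ideal0. Qed.
Lemma cong_sym p q : cong p q -> cong q p.
Proof. by rewrite /fgr_cong => H; rewrite -opprB; apply: in_idealN. Qed.
Lemma cong_trans p q r : cong p q -> cong q r -> cong p r.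
Proof.
rewrite /fgr_cong => H1 H2.
have -> : p - r = (p - q) + (q - r) by rewrite addrA subrK.
exact: in_idealD.
Qed.
Lemma cong_add p q p' q' : cong p q -> cong p' q' -> cong (p + p') (q + q').
Proof.
rewrite /fgr_cong => H1 H2.
have -> : p + p' - (q + q') = (p - q) + (p' - q') by rewrite opprD addrACA.
exact: in_idealD.
Qed.
Lemma cong_opp p q : cong p q -> cong (- p) (- q).
Proof. by rewrite /fgr_cong => H; rewrite -opprD; apply: in_idealN. Qed.
Lemma cong_sub p q p' q' : cong p q -> cong p' q' -> cong (p - p') (q - q').
Proof. by move=> H1 H2; apply: cong_add => //; apply: cong_opp. Qed.
Lemma cong_mul p q p' q' : cong p q -> cong p' q' -> cong (p * p') (q * q').
Proof.
rewrite /fgr_cong => H1 H2.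
have -> : p * p' - q * q' = p' * (p - q) + q * (p' - q').
  by rewrite !mulrBr [q * p']mulrC addrA subrK [p * p']mulrC.
by apply: in_idealD; apply: in_idealMl.
Qed.
End Cong.

Lemma pmap_fadd_xvar (R : comRingType) (M M' : zmodType) (phi : M -> M') (a : nat -> nat -> R) k l m :
  fgr_pmap (R:=R) phi (fadd a k (xvar R l) (xvar R m)) = fadd a k (xvar R (phi l)) (xvar R (phi m)).
Proof.
rewrite /fadd pmap_sum; apply: eq_bigr => i _; rewrite pmap_sum; apply: eq_bigr => j _.
rewrite pmapZ pmapM 2!pmapX.
exact: (congr1 (fun x => a i j *: x) (congr2 (fun x y => x ^+ i * y ^+ j) (pmap_xvar R phi l) (pmap_xvar R phi m))).
Qed.
Section CongMap.
Variables (R : comRingType) (F : fgl R) (M M' : zmodType) (phi : M -> M').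
Hypothesis phi0 : phi 0 = 0.
Hypothesis phiD : forall a b, phi (a + b) = phi a + phi b.
Lemma gen_pmap k c : fgr_gen F k c -> fgr_gen F k (fgr_pmap (R:=R) phi c).
Proof.
case=> [->|[[l [m ->]]|[s [Hs ->]]]].
- left. rewrite pmap_xvar phi0. reflexivity.
- right; left; exists (phi l), (phi m).
  rewrite pmapB pmap_xvar pmap_fadd_xvar phiD. reflexivity.
- right; right; exists [seq phi x | x <- s]; split; first by rewrite size_map.
  rewrite pmap_prod big_map. exact: (eq_bigr _ (fun x _ => pmap_xvar R phi x)).
Qed.
Lemma cong_pmap k p q : fgr_cong F k p q -> fgr_cong F k (fgr_pmap (R:=R) phi p) (fgr_pmap (R:=R) phi q).
Proof.
rewrite /fgr_cong => -[s [Hs E]]; rewrite -pmapB E pmap_sum.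
exists [seq (fgr_pmap (R:=R) phi c.1, fgr_pmap (R:=R) phi c.2) | c <- s]; split.
  by move=> c /mapP [c' Hc' ->] /=; apply: gen_pmap; apply: Hs.
rewrite big_map /=. clear Hs E; elim: s => [|c s IH]; first by rewrite !big_nil.
rewrite !big_cons IH pmapM. reflexivity.
Qed.
End CongMap.

Section Restr.
Variable ray : finType.
Lemma restr_comp (S1 S2 S3 : {set ray}) (f : Lat S1) :
  (forall y, y \in S3 -> y \in S1 -> y \in S2) ->
  restr S2 S3 (restr S1 S2 f) = restr S1 S3 f.
Proof.
move=> H; apply/ffunP => y; rewrite !ffunE.
case: insubP => [z Hz Ez|Hn].
  rewrite ffunE; case: insubP => [z' Hz' Ez'|Hn']; case: insubP => [z'' Hz'' Ez''|Hn''] //.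
  - by congr (f _); apply: val_inj; rewrite Ez' Ez'' Ez.
  - by move: Hn''; rewrite -Ez Hz'.
  - by move: Hn'; rewrite Ez Hz''.
case: insubP => [z'' Hz'' Ez''|Hn''] //.
by move: Hn; rewrite (H _ (svalP y) Hz'').
Qed.
Lemma restr_id (S : {set ray}) (f : Lat S) : restr S S f = f.
Proof.
apply/ffunP => y; rewrite ffunE; case: insubP => [z Hz Ez|Hn].
  by congr (f _); apply: val_inj.
by move: Hn; rewrite (svalP y).
Qed.
Lemma restr0 (S S' : {set ray}) : restr S S' 0 = 0.
Proof. apply/ffunP => y; rewrite !ffunE; case: insubP => [z _ _|_] //; by rewrite ffunE. Qed.
Lemma restrD (S S' : {set ray}) (f g : Lat S) : restr S S' (f + g) = restr S S' f + restr S S' g.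
Proof. apply/ffunP => y; rewrite !ffunE; case: insubP => [z _ _|_]; by rewrite ?ffunE ?addr0. Qed.
Lemma restr_Tsig n (v : ray -> 'rV[int]_n) (S S' : {set ray}) a :
  (forall y, y \in S' -> y \in S) -> restr S S' (to_Tsig v S a) = to_Tsig v S' a.
Proof.
move=> H; apply/ffunP => y; rewrite !ffunE; case: insubP => [z _ Ez|Hn].
  by rewrite ffunE Ez.
by move: Hn; rewrite (H _ (svalP y)).
Qed.
Lemma Tsig0 n (v : ray -> 'rV[int]_n) (S : {set ray}) : to_Tsig v S 0 = 0.
Proof. apply/ffunP => y; rewrite !ffunE /pairing big1 // => i _; by rewrite mxE mul0r. Qed.
Lemma TsigD n (v : ray -> 'rV[int]_n) (S : {set ray}) a b :
  to_Tsig v S (a + b) = to_Tsig v S a + to_Tsig v S b.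
Proof.
apply/ffunP => y; rewrite !ffunE /pairing -big_split; apply: eq_bigr => i _.
by rewrite mxE mulrDl.
Qed.
End Restr.

Section Glue.
Variables (R : comRingType) (F : fgl R) (ray : finType).
Lemma pmap_restr_comp (S1 S2 S3 : {set ray}) (p : xpoly R (Lat S1)) :
  (forall y, y \in S3 -> y \in S1 -> y \in S2) ->
  fgr_pmap (restr S2 S3) (fgr_pmap (restr S1 S2) p) = fgr_pmap (restr S1 S3) p.
Proof. by move=> H; rewrite pmap_comp; apply: eq_pmap => x; apply: restr_comp. Qed.
Lemma pmap_restr_id (S : {set ray}) (p : xpoly R (Lat S)) : fgr_pmap (restr S S) p = p.
Proof. by rewrite (eq_pmap _ (@restr_id _ S)) pmap_id. Qed.
Lemma cong_restr k (S S' : {set ray}) p q : fgr_cong F k p q ->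
  fgr_cong F k (fgr_pmap (R:=R) (restr S S') p) (fgr_pmap (R:=R) (restr S S') q).
Proof. by apply: cong_pmap; [apply: restr0 | apply: restrD]. Qed.

Variables (Sm : {set {set ray}}) (b : forall tau : {set ray}, nat -> xpoly R (Lat tau)).
Hypothesis Hb : forall tau, tau \in Sm -> fgr_elem F (b tau).
Hypothesis Hc : forall tau tau', tau \in Sm -> tau' \in Sm -> tau != tau' ->
        fgr_eq F (fgr_map (restr tau (tau :&: tau')) (b tau))
                 (fgr_map (restr tau' (tau :&: tau')) (b tau')).

Definition gl k (l : seq {set ray}) : xpoly R (Lat [set: ray]) :=
  foldr (fun tau acc => acc + fgr_pmap (restr tau [set: ray])
     (b tau k - fgr_pmap (restr [set: ray] tau) acc)) 0 l.

Lemma gl_inv k l : (forall x, x \in l -> x \in Sm) -> forall tau, tau \in l ->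
  fgr_cong F k (fgr_pmap (restr [set: ray] tau) (gl k l)) (b tau k).
Proof.
elim: l => [|t0 l IH] Hl tau //=.
rewrite in_cons pmapD pmap_restr_comp; last by move=> y _; rewrite in_setT.
case: (eqVneq tau t0) => [->|ne] /= Ht.
  rewrite pmap_restr_id; apply: cong_eq.
  by rewrite addrC subrK.
have Hl' : forall x, x \in l -> x \in Sm by move=> x Hx; apply: Hl; rewrite in_cons Hx orbT.
have IH' := IH Hl' tau Ht.
have H0 : t0 \in Sm by apply: Hl; rewrite in_cons eqxx.
have Ht' : tau \in Sm by apply: Hl'.
set c := b t0 k - _.
have E2 : fgr_pmap (restr t0 (t0 :&: tau)) (fgr_pmap (restr [set: ray] t0) (gl k l))
     = fgr_pmap (R:=R) (restr tau (t0 :&: tau)) (fgr_pmap (restr [set: ray] tau) (gl k l)).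
  rewrite pmap_restr_comp; last by move=> y /setIP [].
  by rewrite pmap_restr_comp; last by move=> y /setIP [].
have Hmu : fgr_cong F k (fgr_pmap (restr t0 (t0 :&: tau)) c) 0.
  rewrite /c pmapB E2.
  apply: (cong_trans (q := fgr_pmap (restr tau (t0 :&: tau)) (b tau k) - fgr_pmap (restr tau (t0 :&: tau)) (b tau k))).
    apply: cong_sub; first by apply: (Hc H0 Ht' _ k); rewrite eq_sym.
    by apply: cong_restr.
  by apply: cong_eq; rewrite subrr.
rewrite -(pmap_restr_comp (S1 := t0) (S2 := t0 :&: tau)); last by move=> y Hy Hy'; rewrite inE Hy Hy'.
rewrite -[b tau k]addr0; apply: cong_add => //.
apply: (cong_trans (q := fgr_pmap (R:=R) (restr (t0 :&: tau) tau) 0)); first exact: cong_restr.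
by apply: cong_eq; rewrite pmap0.
Qed.

Lemma gl_elem k l : (forall x, x \in l -> x \in Sm) -> fgr_cong F k (gl k.+1 l) (gl k l).
Proof.
elim: l => [|t0 l IH] Hl /=; first by apply: cong_eq.
have Hl' : forall x, x \in l -> x \in Sm by move=> x Hx; apply: Hl; rewrite in_cons Hx orbT.
have H0 : t0 \in Sm by apply: Hl; rewrite in_cons eqxx.
apply: cong_add; first exact: IH.
apply: cong_restr; apply: cong_sub; first exact: Hb.
by apply: cong_restr; apply: IH.
Qed.
End Glue.

Local Close Scope fset_scope.
Unset Implicit Arguments.

Theorem proposition3p2 (R : comRingType) (F : fgl R) (n : nat) (ray : finType)
    (v : ray -> 'rV[int]_n) (Sigma : {set {set ray}})
    (HX : smooth_fan v Sigma) :
  let Smax := maximal_cones Sigma in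
  (* CDiv_T(X) = Lat [set: ray]; psi_tau and pr_{tau,mu} *)
  let psi (tau : {set ray}) := fgr_map (R := R) (restr [set: ray] tau) in
  let pr (tau mu : {set ray}) := fgr_map (R := R) (restr tau mu) in
  (* R[[T^*]]_F-module structures *)
  let str (S : {set ray}) := fgr_map (R := R) (to_Tsig v S) in
  (* psi and pi are R[[T^*]]_F-linear *)
  (forall tau, tau \in Smax ->
     forall (s : nat -> xpoly R 'rV[int]_n) (a : nat -> xpoly R (Lat [set: ray])),
     fgr_elem F s -> fgr_elem F a ->
     fgr_eq F (psi tau (fgr_mul (str [set: ray] s) a))
              (fgr_mul (str tau s) (psi tau a))) /\
  (forall tau tau', tau \in Smax -> tau' \in Smax -> tau != tau' ->
     forall (s : nat -> xpoly R 'rV[int]_n) (b : nat -> xpoly R (Lat tau)),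
     fgr_elem F s -> fgr_elem F b ->
     fgr_eq F (pr tau (tau :&: tau') (fgr_mul (str tau s) b))
              (fgr_mul (str (tau :&: tau') s) (pr tau (tau :&: tau') b))) /\
  (* im psi is contained in ker pi *)
  (forall a : nat -> xpoly R (Lat [set: ray]), fgr_elem F a ->
     forall tau tau', tau \in Smax -> tau' \in Smax -> tau != tau' ->
     fgr_eq F (pr tau (tau :&: tau') (psi tau a))
              (pr tau' (tau :&: tau') (psi tau' a))) /\
  (* ker pi is contained in im psi *)
  (forall b : forall tau : {set ray}, nat -> xpoly R (Lat tau),
     (forall tau, tau \in Smax -> fgr_elem F (b tau)) ->
     (forall tau tau', tau \in Smax -> tau' \in Smax -> tau != tau' ->
        fgr_eq F (pr tau (tau :&: tau') (b tau))
                 (pr tau' (tau :&: tau') (b tau'))) ->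
     exists a : nat -> xpoly R (Lat [set: ray]), fgr_elem F a /\
       forall tau, tau \in Smax -> fgr_eq F (psi tau a) (b tau)).
Proof.
move=> Smax psi pr str.
split.
  move=> tau Htau s a Hs Ha k; rewrite /psi /str /fgr_map /fgr_mul.
  apply: cong_eq; rewrite pmapM pmap_comp.
  rewrite (eq_pmap _ (fun x => restr_Tsig v (S:=[set: ray]) (S':=tau) x (fun y _ => in_setT y))).
  reflexivity.
split.
  move=> tau tau' Ht Ht' ne s b Hs Hb k; rewrite /pr /str /fgr_map /fgr_mul.
  apply: cong_eq; rewrite pmapM pmap_comp.
  rewrite (eq_pmap _ (fun x => restr_Tsig v (S:=tau) (S':=tau :&: tau') x (fun y Hy => (setIP Hy).1))).
  reflexivity.
split.
  move=> a Ha tau tau' Ht Ht' ne k; rewrite /pr /psi /fgr_map.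
  apply: cong_eq.
  rewrite pmap_restr_comp; last by move=> y /setIP [].
  rewrite pmap_restr_comp; last by move=> y /setIP [].
  reflexivity.
move=> b Hb Hc.
have Hl : forall x, x \in enum Smax -> x \in Smax by move=> x; rewrite mem_enum.
exists (fun k => gl b k (enum Smax)); split.
  move=> k; exact: (gl_elem Hb k Hl).
move=> tau Ht k; rewrite /psi /fgr_map.
have Ht2 : tau \in enum Smax by rewrite mem_enum.
exact: (gl_inv Hc k Hl Ht2).
Qed.
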